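(* Let $S$ be a square-free semigroup, $D$ a division ring, $(\alpha,\xi)\in Z^2(S,D^* )$ a normal 2-cocycle and $R=D^{\alpha}_{\xi}S$. Let $\Lambda: H^1_{(\alpha,\xi)}(S,D^* )\to\mathrm{Out}\,R$, $B^1_{(\alpha,\xi)}(S,D^* )(\mu,\eta)\mapsto(\mathrm{Inn}\,R)\sigma_{\mu\eta}$, and let $\Phi:\mathrm{Out}\,R\to\mathrm{Aut}(S)$ be the homomorphism described below. Then $\mathrm{Im}\,\Lambda=\mathrm{Ker}\,\Phi$.
   Context: $D$ is a division ring, $D^*$ its group of units, $\mathrm{Aut}(D)$ its ring automorphism group, $\rho_d(x)=dxd^{-1}$. A square-free semigroup is a semigroup $S$ (product $s\cdot t$) with zero $\theta$ and a finite set $E\subseteq S$ of nonzero pairwise orthogonal idempotents with $S=\bigcup_{e,f\in E}e\cdot S\cdot f$ and $|e\cdot S\cdot f\setminus\{\theta\}|\le 1$; $S^*=S\setminus\{\theta\}$, each $s\in S^*$ equals $e\cdot s\cdot f$ for unique $e,f\in E$; $\mathrm{Aut}(S)$ is the semigroup automorphism group. $S^{<0>}=E$, $S^{<n>}=\{(s_1,\dots,s_n)\in S^n:s_1\cdots s_n\ne\theta\}$, $F^n(S,G)$ the group of functions $S^{<n>}\to G$; $\alpha_s=\alpha(s)$, $\mu_e=\mu(e)$. A 2-cocycle is $(\alpha,\xi)\in F^1(S,\mathrm{Aut}(D))\times F^2(S,D^* )$ with $\alpha_s(\xi(t,u))\xi(s,t\cdot u)=\xi(s,t)\xi(s\cdot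 t,u)$ on $S^{<3>}$ and $\alpha_s\circ\alpha_t=\rho_{\xi(s,t)}\circ\alpha_{s\cdot t}$ on $S^{<2>}$; normal means $\alpha_e=1_D$, $\xi(e,e)=1$ for $e\in E$. $D^{\alpha}_{\xi}S$ is the left $D$-vector space with basis $S^*$ and multiplication extended by distributivity from $(d_1s)(d_2t)=d_1\alpha_s(d_2)\xi(s,t)(s\cdot t)$ if $s\cdot t\ne\theta$, $0$ otherwise. $\mathrm{Inn}\,R$ is the group of inner automorphisms, $\mathrm{Out}\,R=\mathrm{Aut}\,R/\mathrm{Inn}\,R$. $Z^1_{(\alpha,\xi)}(S,D^* )$ is the subgroup of $F^0(S,\mathrm{Aut}(D))\ltimes F^1(S,D^* )$ of pairs $(\mu,\eta)$ with $\mu_e\circ\alpha_s\circ\mu_f^{-1}=\rho_{\eta(s)}\circ\alpha_s$ for $s=e\cdot s\cdot f\in S^*$ and $\mu_e(\xi(s,t))=\eta(s)\alpha_s(\eta(t))\xi(s,t)\eta(s\cdot t)^{-1}$ for $(s,t)\in S^{<2>}$, $s=e\cdot s$. $B^1_{(\alpha,\xi)}(S,D^* )$ is its normal subgroup of pairs for which some $\epsilon\in F^0(S,D^* )$ gives $\mu_e=\rho_{\epsilon(e)}$ and $\eta(s)=\epsilon(e)\alpha_s(\epsilon(f)^{-1})$ for $s=e\cdot s\cdot f$; $H^1_{(\alpha,\xi)}(S,D^* )=Z^1_{(\alpha,\xi)}/B^1_{(\alpha,\xi)}$. For $(\mu,\eta)\in Z^1_{(\alpha,\xi)}(S,D^*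 )$, $\sigma_{\mu\eta}\in\mathrm{Aut}\,R$ is the additive map $\sigma_{\mu\eta}(ds)=\mu_e(d)\eta(s)s$ ($s=e\cdot s$). The map $\Phi$: let $\mathrm{Aut}_0R=\{\gamma\in\mathrm{Aut}\,R:\gamma(E)=E\}$. Every coset $(\mathrm{Inn}\,R)\gamma$ contains some $\gamma_0\in\mathrm{Aut}_0R$, and every $\gamma_0\in\mathrm{Aut}_0R$ has the form $\gamma_0(ds)=\mu_e(d)\eta(s)\phi(s)$ ($d\in D$, $s=e\cdot s\in S^*$) for some $\mu\in F^0(S,\mathrm{Aut}(D))$, $\eta\in F^1(S,D^* )$ and $\phi\in\mathrm{Aut}(S)$, where $\phi$ depends only on the coset; $\Phi((\mathrm{Inn}\,R)\gamma_0)=\phi$ defines a group homomorphism $\mathrm{Out}\,R\to\mathrm{Aut}(S)$. *)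

(* Defs.v *)
From HB Require Import structures.
From mathcomp Require Import all_boot all_order all_algebra.
Unset Implicit Arguments.
Unset Strict Implicit.
Unset Printing Implicit Defensive.
Import GRing.Theory.
Local Open Scope ring_scope.

(* A square-free semigroup: carrier S (finite; finiteness follows from the
   definition since S is a finite union of sets with <= 2 elements),
   product [mul], zero [th], finite set E of idempotents. *)
Section Defs.
Variable S : finType.
Variables (mul : S -> S -> S) (th : S) (E : {set S}).

Definition in_eSf (e f s : S) : Prop := exists t, s = mul (mul e t) f.

Definition square_free_semigroup : Prop :=
  [/\ associative mul /\ (forall s, mul th s = th /\ mul s th = th),
      (forall e, e \in E -> e != th /\ mul e e = e),
      (forall e f, e \in E -> f \in E -> e != f -> mul e f = th),
      (forall s, exists e f, [/\ e \in E, f \in E & in_eSf e f s]) &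
      (forall e f s t, e \in E -> f \in E -> in_eSf e f s -> in_eSf e f t ->
          s != th -> t != th -> s = t)].

Definition is_S_aut (phi : S -> S) : Prop :=
  bijective phi /\ (forall s t, phi (mul s t) = mul (phi s) (phi t)).

(* S^* = S \ {theta}, the basis of R *)
Definition Sstar := {s : S | s != th}.

Definition lidem (s : S) : S := odflt th [pick e in E | mul e s == s].

Variable D : unitRingType.

Definition division_ring : Prop := forall x : D, x != 0 -> x \is a GRing.unit.

Definition is_ring_aut (f : D -> D) : Prop :=
  [/\ bijective f, f 1 = 1, {morph f : x y / x + y} & {morph f : x y / x * y}].

Definition rho (d x : D) : D := d * x * d^-1.

Variables (alpha : S -> D -> D) (xi : S -> S -> D).

Definition normal_2cocycle : Prop :=
  [/\ (forall s, s != th -> is_ring_aut (alpha s)),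
      (forall s t, mul s t != th -> xi s t != 0),
      (forall s t u, mul (mul s t) u != th ->
          alpha s (xi t u) * xi s (mul t u) = xi s t * xi (mul s t) u),
      (forall s t, mul s t != th ->
          forall d, alpha s (alpha t d) = rho (xi s t) (alpha (mul s t) d)) &
      (forall e, e \in E -> (forall d, alpha e d = d) /\ xi e e = 1)].

(* The ring R = D^alpha_xi S : left D-vector space with basis S^*;
   an element is its coefficient function S^* -> D. *)
Local Notation R := {ffun Sstar -> D}.

(* the element d s of R (zero if s = theta) *)
Definition bvec (d : D) (s : S) : R := [ffun u : Sstar => if val u == s then d else 0].

Definition Rmul (x y : R) : R :=
  [ffun u : Sstar => \sum_(s : Sstar) \sum_(t : Sstar | mul (val s) (val t) == val u)
      x s * alpha (val s) (y t) * xi (val s) (val t)].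

(* the identity of R : sum of the e in E *)
Definition Rone : R := [ffun u : Sstar => if val u \in E then 1 else 0].

Definition is_R_aut (g : R -> R) : Prop :=
  [/\ bijective g, g Rone = Rone, {morph g : x y / x + y} & {morph g : x y / Rmul x y}].

Definition is_inner (g : R -> R) : Prop :=
  exists u v : R, [/\ Rmul u v = Rone, Rmul v u = Rone &
                      forall x, g x = Rmul (Rmul u x) v].

Definition is_R_aut0 (g : R -> R) : Prop :=
  [/\ is_R_aut g,
      (forall e, e \in E -> exists2 f, f \in E & g (bvec 1 e) = bvec 1 f) &
      (forall f, f \in E -> exists2 e, e \in E & g (bvec 1 e) = bvec 1 f)].

Definition Z1 (mu : S -> D -> D) (eta : S -> D) : Prop :=
  [/\ (forall e, e \in E -> is_ring_aut (mu e)),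
      (forall s, s != th -> eta s != 0),
      (* mu_e o alpha_s o mu_f^-1 = rho_(eta s) o alpha_s, for s = e.s.f in S^* ;
         here d' = mu_f^-1 d *)
      (forall s e f, s != th -> e \in E -> f \in E -> s = mul (mul e s) f ->
          forall d d', mu f d' = d -> mu e (alpha s d') = rho (eta s) (alpha s d)) &
      (forall s t e, mul s t != th -> e \in E -> s = mul e s ->
          mu e (xi s t) = eta s * alpha s (eta t) * xi s t * (eta (mul s t))^-1)].

Definition sigma (mu : S -> D -> D) (eta : S -> D) (x : R) : R :=
  [ffun u : Sstar => mu (lidem (val u)) (x u) * eta (val u)].

(* Phi((Inn R) gamma) = phi : some gamma0 in Aut_0 R inside the coset
   (Inn R) gamma has the form gamma0(d s) = mu_e(d) eta(s) phi(s). *)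
Definition Phi_rel (g : R -> R) (phi : S -> S) : Prop :=
  exists g0 : R -> R,
    [/\ is_R_aut0 g0,
        (exists iota, is_inner iota /\ forall x, g0 x = iota (g x)) &
        exists (mu : S -> D -> D) (eta : S -> D),
          [/\ (forall e, e \in E -> is_ring_aut (mu e)),
              (forall s, s != th -> eta s != 0),
              is_S_aut phi &
              (forall d s e, s != th -> e \in E -> s = mul e s ->
                  g0 (bvec d s) = bvec (mu e d * eta s) (phi s))]].

End Defs.

(* Main.v *)
Require Import Defs.
From HB Require Import structures.
From mathcomp Require Import all_boot all_order all_algebra.
From Stdlib Require Import IndefiniteDescription.
Import GRing.Theory.
Local Open Scope ring_scope.
Set Implicit Arguments. Unset Strict Implicit.
Section Main.
Variable S : finType.
Variables (mul : S -> S -> S) (th : S) (E : {set S}) (D : unitRingType)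
  (alpha : S -> D -> D) (xi : S -> S -> D).
Hypothesis HS : square_free_semigroup S mul th E.
Hypothesis HD : division_ring D.
Hypothesis Hc : normal_2cocycle S mul th E D alpha xi.

Local Notation SS := (Sstar S th).
Local Notation R := {ffun SS -> D}.
Local Notation Rm := (Rmul S mul th D alpha xi).
Local Notation R1 := (Rone S th E D).
Local Notation bv := (bvec S th D).
Local Notation lid := (lidem S mul th E).

Lemma mulA : associative mul.
Proof. by case: HS => [[]]. Qed.
Lemma mul0s s : mul th s = th.
Proof. by case: HS => [[_ H]] _ _ _ _; case: (H s). Qed.
Lemma muls0 s : mul s th = th.
Proof. by case: HS => [[_ H]] _ _ _ _; case: (H s). Qed.
Lemma Ent e : e \in E -> e != th.
Proof. by case: HS => _ H _ _ _ /H []. Qed.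
Lemma Eidem e : e \in E -> mul e e = e.
Proof. by case: HS => _ H _ _ _ /H []. Qed.
Lemma Eorth e f : e \in E -> f \in E -> e != f -> mul e f = th.
Proof. by case: HS => _ _ H _ _; apply: H. Qed.

Lemma decomp s : exists e f, [/\ e \in E, f \in E, mul e s = s & mul s f = s].
Proof.
case: HS => _ _ _ H _; case: (H s) => e [f [eE fE [t ->]]].
exists e, f; split => //.
  by rewrite !mulA Eidem.
by rewrite -!mulA Eidem.
Qed.

Lemma lunique e e' s : e \in E -> e' \in E -> mul e s = s -> mul e' s = s ->
  s != th -> e = e'.
Proof.
move=> eE e'E H1 H2 sn; apply/eqP; apply: contraNT sn => ne.
have -> : s = mul e' (mul e s) by rewrite H1 H2.
have ne' : e' != e by rewrite eq_sym.
by rewrite mulA (Eorth e'E eE ne') mul0s.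
Qed.

Lemma runique f f' s : f \in E -> f' \in E -> mul s f = s -> mul s f' = s ->
  s != th -> f = f'.
Proof.
move=> eE e'E H1 H2 sn; apply/eqP; apply: contraNT sn => ne.
have -> : s = mul (mul s f) f' by rewrite H1 H2.
by rewrite -mulA (Eorth eE e'E ne) muls0.
Qed.

Lemma lid_spec s : s != th -> lid s \in E /\ mul (lid s) s = s.
Proof.
move=> sn; rewrite /lidem; case: pickP => [e /andP [eE /eqP h] | H] //=.
case: (decomp s) => e [f [eE _ h _]].
by move: (H e); rewrite eE h eqxx.
Qed.

Lemma lid_eq s e : s != th -> e \in E -> mul e s = s -> lid s = e.
Proof.
move=> sn eE h; case: (lid_spec sn) => h1 h2; exact: (lunique h1 eE h2 h sn).
Qed.

Lemma lidE e : e \in E -> lid e = e.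
Proof. by move=> eE; apply: lid_eq; rewrite ?Ent ?Eidem. Qed.

Lemma lid_mul s t : mul s t != th -> lid (mul s t) = lid s.
Proof.
move=> h; have sn : s != th by apply: contraNneq h => ->; rewrite mul0s.
case: (lid_spec sn) => h1 h2; apply: lid_eq => //.
by rewrite mulA h2.
Qed.

Lemma mul_lid s t : mul s t != th -> mul s (lid t) = s.
Proof.
move=> h; have tn : t != th by apply: contraNneq h => ->; rewrite muls0.
have sn : s != th by apply: contraNneq h => ->; rewrite mul0s.
case: (lid_spec tn) => h1 h2; case: (decomp s) => _ [f [_ fE _ hf]].
suff <- : f = lid t by [].
apply/eqP; apply: contraNT h => ne.
have -> : mul s t = mul (mul s f) (mul (lid t) t) by rewrite hf h2.
by rewrite -mulA (mulA f) (Eorth fE h1 ne) mul0s muls0.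
Qed.

Section RautLemmas.
Variable f : D -> D.
Hypothesis hf : is_ring_aut D f.
Lemma rautD x y : f (x + y) = f x + f y.
Proof. by case: hf. Qed.
Lemma rautM x y : f (x * y) = f x * f y.
Proof. by case: hf. Qed.
Lemma raut1 : f 1 = 1.
Proof. by case: hf. Qed.
Lemma raut0 : f 0 = 0.
Proof.
have h := rautD 0 0; rewrite addr0 in h.
by apply: (addrI (f 0)); rewrite addr0 -h.
Qed.
Lemma raut_sum (I : Type) (r : seq I) (P : pred I) (F : I -> D) :
  f (\sum_(i <- r | P i) F i) = \sum_(i <- r | P i) f (F i).
Proof. exact: (big_morph f rautD raut0). Qed.
End RautLemmas.

Lemma alpha_aut s : s != th -> is_ring_aut D (alpha s).
Proof. by case: Hc => H _ _ _ _; apply: H. Qed.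
Lemma alphaE e d : e \in E -> alpha e d = d.
Proof. by case: Hc => _ _ _ _ H /H [->]. Qed.
Lemma xiEE e : e \in E -> xi e e = 1.
Proof. by case: Hc => _ _ _ _ H /H []. Qed.
Lemma xi_nz s t : mul s t != th -> xi s t != 0.
Proof. by case: Hc => _ H _ _ _; apply: H. Qed.
Lemma xi_unit s t : mul s t != th -> xi s t \is a GRing.unit.
Proof. by move=> h; apply: HD; apply: xi_nz. Qed.
Lemma cocy s t u : mul (mul s t) u != th ->
  alpha s (xi t u) * xi s (mul t u) = xi s t * xi (mul s t) u.
Proof. by case: Hc => _ _ H _ _; apply: H. Qed.
Lemma alpha_comp s t d : mul s t != th ->
  alpha s (alpha t d) = rho D (xi s t) (alpha (mul s t) d).
Proof. by case: Hc => _ _ _ H _ h; apply: H. Qed.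

Lemma xi_l e s : e \in E -> mul e s = s -> s != th -> xi e s = 1.
Proof.
move=> eE h sn.
have h2 : mul (mul e e) s != th by rewrite Eidem // h.
have hu : xi e s \is a GRing.unit by apply: xi_unit; rewrite h.
have := cocy h2; rewrite alphaE // xiEE // mul1r h Eidem //.
by rewrite -{3}(mul1r (xi e s)) => /(mulIr hu).
Qed.

Lemma xi_r s f : f \in E -> mul s f = s -> s != th -> xi s f = 1.
Proof.
move=> fE h sn.
have h2 : mul (mul s f) f != th by rewrite h h.
have := cocy h2; rewrite xiEE // Eidem // h.
rewrite raut1; last by apply: alpha_aut.
rewrite mul1r => /esym.
have hu : xi s f \is a GRing.unit by apply: xi_unit; rewrite h.
by rewrite -{3}(mulr1 (xi s f)); apply: (mulrI hu).
Qed.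

Lemma bvE d s (u : SS) : bv d s u = if val u == s then d else 0.
Proof. by rewrite ffunE. Qed.

Lemma bv_th d : bv d th = 0.
Proof. by apply/ffunP => u; rewrite !ffunE (negbTE (valP u)). Qed.

Lemma bv0 s : bv 0 s = 0.
Proof. by apply/ffunP => u; rewrite !ffunE; case: ifP. Qed.

Lemma bvD d d' s : bv (d + d') s = bv d s + bv d' s.
Proof. by apply/ffunP => u; rewrite !ffunE; case: ifP; rewrite ?addr0. Qed.

Lemma bv_inj d d' s : s != th -> bv d s = bv d' s -> d = d'.
Proof.
move=> sn /ffunP /(_ (exist _ s sn)); rewrite !ffunE /= eqxx //.
Qed.

Lemma sum_at (v : S) (hv : v != th) (F : SS -> D) :
  \sum_(a : SS) (if val a == v then F a else 0) = F (exist _ v hv).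
Proof.
rewrite (bigD1 (exist _ v hv)) //= eqxx big1 ?addr0 // => a ne.
case: eqP => // ha; case/eqP: ne; apply: val_inj; exact: ha.
Qed.

Lemma decompR (x : R) : x = \sum_(u : SS) bv (x u) (val u).
Proof.
apply/ffunP => w; rewrite sum_ffunE.
rewrite (eq_bigr (fun a => if val a == val w then x a else 0)); last first.
  by move=> a _; rewrite ffunE eq_sym.
by rewrite (sum_at (valP w)); congr (fun_of_fin x _); exact: val_inj.
Qed.

Lemma Rm0l y : Rm 0 y = 0.
Proof.
apply/ffunP => u; rewrite !ffunE big1 // => s _; rewrite big1 // => t _.
by rewrite ffunE !mul0r.
Qed.

Lemma Rm0r x : Rm x 0 = 0.
Proof.
apply/ffunP => u; rewrite !ffunE big1 // => s _; rewrite big1 // => t _.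
by rewrite ffunE (raut0 (alpha_aut (valP s))) mulr0 mul0r.
Qed.

Lemma RmDl x y z : Rm (x + y) z = Rm x z + Rm y z.
Proof.
apply/ffunP => u; rewrite !ffunE -big_split; apply: eq_bigr => s _.
rewrite -big_split; apply: eq_bigr => t _.
by rewrite ffunE !mulrDl.
Qed.

Lemma RmDr x y z : Rm x (y + z) = Rm x y + Rm x z.
Proof.
apply/ffunP => u; rewrite !ffunE -big_split; apply: eq_bigr => s _.
rewrite -big_split; apply: eq_bigr => t _.
by rewrite ffunE (rautD (alpha_aut (valP s))) mulrDr mulrDl.
Qed.

Lemma Rm_suml (I : Type) (r : seq I) (P : pred I) (F : I -> R) z :
  Rm (\sum_(i <- r | P i) F i) z = \sum_(i <- r | P i) Rm (F i) z.
Proof. exact: (big_morph (fun x => Rm x z) (fun x y => RmDl x y z) (Rm0l z)). Qed.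

Lemma Rm_sumr (I : Type) (r : seq I) (P : pred I) (F : I -> R) z :
  Rm z (\sum_(i <- r | P i) F i) = \sum_(i <- r | P i) Rm z (F i).
Proof. exact: (big_morph (fun x => Rm z x) (fun x y => RmDr z x y) (Rm0r z)). Qed.

Lemma Rm_bv d d' s t :
  Rm (bv d s) (bv d' t) = bv (d * alpha s d' * xi s t) (mul s t).
Proof.
have [->|sn] := eqVneq s th; first by rewrite bv_th Rm0l mul0s bv_th.
have [->|tn] := eqVneq t th; first by rewrite bv_th Rm0r muls0 bv_th.
apply/ffunP => u; rewrite !ffunE eq_sym.
set c := (if _ then _ else _).
rewrite -(sum_at sn (fun _ => c)); apply: eq_bigr => -[a an] _ /=.
rewrite big_mkcond /=.
case: (a =P s) => [ha|ha]; last first.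
  by rewrite big1 // => b _; rewrite !ffunE /=; case: ifP => // _; case: (a =P s) => // _; rewrite !mul0r.
rewrite -(sum_at tn (fun _ => c)); apply: eq_bigr => -[b bn] _ /=.
rewrite !ffunE /= ha eqxx /c; case: (b =P t) => [hb|hb].
  by rewrite hb.
by rewrite (raut0 (alpha_aut sn)) mulr0 mul0r; case: ifP.
Qed.

Lemma Rml (F : SS -> R) z : Rm (\sum_(u : SS) F u) z = \sum_(u : SS) Rm (F u) z.
Proof. exact: Rm_suml. Qed.
Lemma Rmr (F : SS -> R) z : Rm z (\sum_(u : SS) F u) = \sum_(u : SS) Rm z (F u).
Proof. exact: Rm_sumr. Qed.

Lemma Rm_bv_assoc d d' d'' s t c :
  Rm (Rm (bv d s) (bv d' t)) (bv d'' c) = Rm (bv d s) (Rm (bv d' t) (bv d'' c)).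
Proof.
rewrite !Rm_bv mulA.
have [->|h] := eqVneq (mul (mul s t) c) th; first by rewrite !bv_th.
have stn : mul s t != th by apply: contraNneq h => ->; rewrite mul0s.
have tcn : mul t c != th by apply: contraNneq h => e; rewrite -mulA e muls0.
have sn : s != th by apply: contraNneq stn => ->; rewrite mul0s.
congr bv.
rewrite (rautM (alpha_aut sn)) (rautM (alpha_aut sn)) alpha_comp // /rho.
rewrite -!mulrA cocy //.
by rewrite mulKr // xi_unit.
Qed.

Lemma bilin (A B : SS -> R) :
  Rm (\sum_a A a) (\sum_b B b) = \sum_a \sum_b Rm (A a) (B b).
Proof. by rewrite Rml; apply: eq_bigr => a _; rewrite Rmr. Qed.

Lemma assoc_sum (A B C : SS -> R) :
  (forall a b c, Rm (Rm (A a) (B b)) (C c) = Rm (A a) (Rm (B b) (C c))) ->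
  Rm (Rm (\sum_a A a) (\sum_b B b)) (\sum_c C c) =
  Rm (\sum_a A a) (Rm (\sum_b B b) (\sum_c C c)).
Proof.
move=> H.
have E1 : Rm (\sum_a A a) (\sum_b B b) = \sum_a \sum_b Rm (A a) (B b).
  by rewrite Rml; apply: eq_bigr => a _; rewrite Rmr.
have E2 : Rm (\sum_b B b) (\sum_c C c) = \sum_b \sum_c Rm (B b) (C c).
  by rewrite Rml; apply: eq_bigr => a _; rewrite Rmr.
rewrite E1 E2 [LHS]Rml [RHS]Rml; apply: eq_bigr => a _.
rewrite [LHS]Rml [RHS]Rmr; apply: eq_bigr => b _.
rewrite [LHS]Rmr [RHS]Rmr; apply: eq_bigr => c _.
exact: H.
Qed.

Lemma Rm_assoc x y z : Rm (Rm x y) z = Rm x (Rm y z).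
Proof.
rewrite (decompR x) (decompR y) (decompR z).
apply: assoc_sum => a b c; exact: Rm_bv_assoc.
Qed.

Lemma Rm1l x : Rm R1 x = x.
Proof.
rewrite (decompR x) (decompR R1) bilin.
rewrite exchange_big /=; apply: eq_bigr => b _.
have bn := valP b.
have [lE lb] := lid_spec bn.
have ln : lid (val b) != th by apply: Ent.
rewrite (bigD1 (exist _ (lid (val b)) ln)) //= big1.
  rewrite addr0 Rm_bv /= ffunE /= lE alphaE // xi_l //.
  by rewrite mul1r mulr1 lb.
move=> a ne; rewrite Rm_bv ffunE.
case: ifP => aE; last by rewrite !mul0r bv0.
have ne' : val a != lid (val b).
  by apply: contraNneq ne => e; apply/eqP; apply: val_inj.
have h : mul (val a) (mul (lid (val b)) (val b)) = th.
  by rewrite mulA (Eorth aE lE ne') mul0s.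
by rewrite lb in h; rewrite h bv_th.
Qed.

Lemma Rm1r x : Rm x R1 = x.
Proof.
rewrite (decompR x) (decompR R1) bilin; apply: eq_bigr => b _.
have bn := valP b.
have [_ [f [_ fE _ bf]]] := decomp (val b).
have fn : f != th by apply: Ent.
rewrite (bigD1 (exist _ f fn)) //= big1.
  rewrite addr0 Rm_bv /= ffunE /= fE xi_r //.
  by rewrite (raut1 (alpha_aut bn)) !mulr1 bf.
move=> a ne; rewrite Rm_bv ffunE.
case: ifP => aE; last by rewrite (raut0 (alpha_aut bn)) mulr0 mul0r bv0.
have ne' : f != val a.
  by apply: contraNneq ne => e; apply/eqP; apply: val_inj.
have h : mul (mul (val b) f) (val a) = th.
  by rewrite -mulA (Eorth fE aE ne') muls0.
by rewrite bf in h; rewrite h bv_th.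
Qed.

Local Notation inner := (is_inner S mul th E D alpha xi).

Lemma inner_inv iota : inner iota ->
  exists iota', inner iota' /\ forall y, iota' (iota y) = y.
Proof.
case=> u [v [huv hvu hi]].
exists (fun x => Rm (Rm v x) u); split.
  by exists v, u; split.
move=> y; rewrite hi -Rm_assoc -Rm_assoc hvu Rm1l.
by rewrite Rm_assoc hvu Rm1r.
Qed.

Section Sigma.
Variables (mu : S -> D -> D) (eta : S -> D).
Hypothesis Hmu : forall e, e \in E -> is_ring_aut D (mu e).
Local Notation sg := (sigma S mul th E D mu eta).

Lemma sigma_bv d s e : s != th -> e \in E -> mul e s = s ->
  sg (bv d s) = bv (mu e d * eta s) s.
Proof.
move=> sn eE h; apply/ffunP => u; rewrite !ffunE.
case: (val u =P s) => [hu|hu].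
  by rewrite hu (lid_eq sn eE h).
have [lE _] := lid_spec (valP u).
by rewrite (raut0 (Hmu lE)) mul0r.
Qed.

Lemma sigmaD x y : sg (x + y) = sg x + sg y.
Proof.
apply/ffunP => u; rewrite !ffunE.
have [lE _] := lid_spec (valP u).
by rewrite (rautD (Hmu lE)) mulrDl.
Qed.

Lemma sigma0 : sg 0 = 0.
Proof.
apply/ffunP => u; rewrite !ffunE.
have [lE _] := lid_spec (valP u).
by rewrite (raut0 (Hmu lE)) mul0r.
Qed.

Lemma sigma_sum (F : SS -> R) : sg (\sum_(u : SS) F u) = \sum_(u : SS) sg (F u).
Proof. exact: (big_morph sg sigmaD sigma0). Qed.

Hypothesis H4 : forall s t e, mul s t != th -> e \in E -> s = mul e s ->
  mu e (xi s t) = eta s * alpha s (eta t) * xi s t * (eta (mul s t))^-1.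
Hypothesis Heta : forall s, s != th -> eta s != 0.

Lemma eta_unit s : s != th -> eta s \is a GRing.unit.
Proof. by move=> sn; apply: HD; apply: Heta. Qed.

Lemma eta_one e : e \in E -> eta e = 1.
Proof.
move=> eE; have en := Ent eE.
have h : mul e e != th by rewrite Eidem.
have := H4 h eE (esym (Eidem eE)).
have hu := eta_unit en.
by rewrite xiEE // (raut1 (Hmu eE)) alphaE // mulr1 Eidem // (mulrK hu) => ->.
Qed.

Lemma sigma1 : sg R1 = R1.
Proof.
apply/ffunP => u; rewrite !ffunE.
have [lE _] := lid_spec (valP u).
case: ifP => uE.
  by rewrite (raut1 (Hmu lE)) mul1r eta_one.
by rewrite (raut0 (Hmu lE)) mul0r.
Qed.

Hypothesis H3 : forall s e f, s != th -> e \in E -> f \in E -> s = mul (mul e s) f ->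
  forall d d', mu f d' = d -> mu e (alpha s d') = rho D (eta s) (alpha s d).

Lemma sigma_bv_mul d d' s t :
  sg (Rm (bv d s) (bv d' t)) = Rm (sg (bv d s)) (sg (bv d' t)).
Proof.
have [->|sn] := eqVneq s th; first by rewrite bv_th Rm0l sigma0 Rm0l.
have [->|tn] := eqVneq t th; first by rewrite bv_th Rm0r sigma0 Rm0r.
have [eE es] := lid_spec sn; have [fE ft] := lid_spec tn.
rewrite (sigma_bv _ sn eE es) (sigma_bv _ tn fE ft) !Rm_bv.
have [->|stn] := eqVneq (mul s t) th; first by rewrite !bv_th sigma0.
have est : mul (lid s) (mul s t) = mul s t by rewrite mulA es.
rewrite (sigma_bv _ stn eE est); congr bv.
have sf : mul s (lid t) = s by apply: mul_lid.
have h3 := H3 sn eE fE (etrans (esym sf) (congr1 (mul^~ _) (esym es))) (erefl (mu (lid t) d')).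
rewrite !(rautM (Hmu eE)) h3 (H4 stn eE (esym es)) /rho.
rewrite (rautM (alpha_aut sn)).
by rewrite -!mulrA mulKr ?eta_unit // mulVr ?eta_unit // mulr1.
Qed.

Lemma sigmaM x y : sg (Rm x y) = Rm (sg x) (sg y).
Proof.
rewrite (decompR x) (decompR y) bilin !sigma_sum bilin.
apply: eq_bigr => a _; rewrite sigma_sum; apply: eq_bigr => b _.
exact: sigma_bv_mul.
Qed.

Lemma sigma_bij : bijective sg.
Proof.
have [minv Hm] : exists minv : S -> D -> D, forall e, e \in E ->
    cancel (mu e) (minv e) /\ cancel (minv e) (mu e).
  apply: (functional_choice (fun e g => e \in E -> cancel (mu e) g /\ cancel g (mu e))).
  move=> e; case: (boolP (e \in E)) => eE.
    by case: (Hmu eE) => -[g h1 h2] _ _ _; exists g.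
  by exists id.
exists (fun x : R => [ffun u : SS => minv (lid (val u)) (x u * (eta (val u))^-1)]).
  move=> x; apply/ffunP => u; rewrite !ffunE.
  have [lE _] := lid_spec (valP u); have [h1 _] := Hm _ lE.
  by rewrite mulrK ?eta_unit ?(valP u) // h1.
move=> x; apply/ffunP => u; rewrite !ffunE.
have [lE _] := lid_spec (valP u); have [_ h2] := Hm _ lE.
by rewrite h2 divrK // eta_unit // (valP u).
Qed.

Lemma sigma_aut : is_R_aut S mul th E D alpha xi sg.
Proof. split; [exact: sigma_bij | exact: sigma1 | exact: sigmaD | exact: sigmaM]. Qed.

End Sigma.

Section FromG0.
Variables (g0 : R -> R) (mu : S -> D -> D) (eta : S -> D).
Hypothesis Hg0 : is_R_aut S mul th E D alpha xi g0.
Hypothesis Hmu : forall e, e \in E -> is_ring_aut D (mu e).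
Hypothesis Heta : forall s, s != th -> eta s != 0.
Hypothesis Hg : forall d s e, s != th -> e \in E -> s = mul e s ->
  g0 (bv d s) = bv (mu e d * eta s) (id s).

Lemma g0D x y : g0 (x + y) = g0 x + g0 y.
Proof. by case: Hg0. Qed.
Lemma g0M x y : g0 (Rm x y) = Rm (g0 x) (g0 y).
Proof. by case: Hg0. Qed.
Lemma g00 : g0 0 = 0.
Proof.
have h := g0D 0 0; rewrite addr0 in h.
by apply: (addrI (g0 0)); rewrite addr0 -h.
Qed.

Lemma g0_sigma x : g0 x = sigma S mul th E D mu eta x.
Proof.
rewrite (decompR x) (big_morph g0 g0D g00) sigma_sum //.
apply: eq_bigr => u _.
have [lE lu] := lid_spec (valP u).
by rewrite (Hg _ (valP u) lE (esym lu)) (@sigma_bv mu eta Hmu _ _ _ (valP u) lE lu).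
Qed.

Lemma Z1_4 : forall s t e, mul s t != th -> e \in E -> s = mul e s ->
  mu e (xi s t) = eta s * alpha s (eta t) * xi s t * (eta (mul s t))^-1.
Proof.
move=> s t e stn eE es.
have sn : s != th by apply: contraNneq stn => ->; rewrite mul0s.
have tn : t != th by apply: contraNneq stn => ->; rewrite muls0.
have [fE ft] := lid_spec tn.
have := g0M (bv 1 s) (bv 1 t).
have est : mul s t = mul e (mul s t) by rewrite mulA -es.
rewrite Rm_bv (Hg _ stn eE est) (Hg _ sn eE es) (Hg _ tn fE (esym ft)) Rm_bv /=.
move/(bv_inj stn).
rewrite (raut1 (alpha_aut sn)) !mul1r (raut1 (Hmu eE)) mul1r (raut1 (Hmu fE)) mul1r.
move=> <-; rewrite mulrK //; apply: HD; exact: Heta.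
Qed.

Lemma Z1_3 : forall s e f, s != th -> e \in E -> f \in E -> s = mul (mul e s) f ->
  forall d d', mu f d' = d -> mu e (alpha s d') = rho D (eta s) (alpha s d).
Proof.
move=> s e f sn eE fE hs d d' hd.
have es : mul e s = s by rewrite {1}hs !mulA Eidem // -hs.
have sf : mul s f = s by rewrite {1}hs -!mulA Eidem // mulA -hs.
have fn : f != th by apply: Ent.
have := g0M (bv 1 s) (bv d' f).
rewrite Rm_bv sf xi_r // (Hg _ sn eE (esym es)) (Hg _ sn eE (esym es)).
rewrite (Hg _ fn fE (esym (Eidem fE))) Rm_bv /= sf xi_r //.
rewrite (@eta_one mu eta Hmu Z1_4 Heta f fE) hd.
move/(bv_inj sn).
rewrite (raut1 (Hmu eE)) !mul1r !mulr1 => h.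
rewrite /rho -h mulrK //; apply: HD; exact: Heta.
Qed.

Lemma Z1_g0 : Z1 S mul th E D alpha xi mu eta.
Proof. split; [exact: Hmu | exact: Heta | exact: Z1_3 | exact: Z1_4]. Qed.

End FromG0.
End Main.

Theorem mainTheorem5 (S : finType) (mul : S -> S -> S) (th : S) (E : {set S})
    (D : unitRingType) (alpha : S -> D -> D) (xi : S -> S -> D) :
  square_free_semigroup S mul th E ->
  division_ring D ->
  normal_2cocycle S mul th E D alpha xi ->
  forall g : {ffun Sstar S th -> D} -> {ffun Sstar S th -> D},
    is_R_aut S mul th E D alpha xi g ->
    ((exists (mu : S -> D -> D) (eta : S -> D),
        Z1 S mul th E D alpha xi mu eta /\
        exists iota, is_inner S mul th E D alpha xi iota /\
                     forall x, g x = iota (sigma S mul th E D mu eta x))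
     <-> Phi_rel S mul th E D alpha xi g id).
Proof.
move=> HS HD Hc g Hg; split.
- case=> mu [eta [hZ [iota [hi hg]]]].
  case: hZ => Hmu Heta H3 H4.
  have [iota' [hi' hinv]] := inner_inv HS HD Hc hi.
  exists (sigma S mul th E D mu eta); split.
  + split; first exact: (sigma_aut HS HD Hc Hmu H4 Heta H3).
      move=> e eE; exists e => //.
      rewrite (sigma_bv HS eta Hmu _ (Ent HS eE) eE (Eidem HS eE)).
      by rewrite (raut1 (Hmu _ eE)) mul1r (eta_one HS HD Hc Hmu H4 Heta eE).
    move=> e eE; exists e => //.
    rewrite (sigma_bv HS eta Hmu _ (Ent HS eE) eE (Eidem HS eE)).
    by rewrite (raut1 (Hmu _ eE)) mul1r (eta_one HS HD Hc Hmu H4 Heta eE).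
  + by exists iota'; split => // x; rewrite hg hinv.
  + exists mu, eta; split => //.
      by split => //; exists id.
    move=> d s e sn eE es; exact: (sigma_bv HS eta Hmu _ sn eE (esym es)).
- case=> g0 [[Hg0 _ _] [iota [hi hg0]] [mu [eta [Hmu Heta _ Hform]]]].
  exists mu, eta; split; first exact: (Z1_g0 HS HD Hc Hg0 Hmu Heta Hform).
  have [iota' [hi' hinv]] := inner_inv HS HD Hc hi.
  exists iota'; split => // x.
  by rewrite -(g0_sigma HS Hg0 Hmu Hform) hg0 hinv.
Qed.
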